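(* For infinitely many positive integers $n$ there is a directed tree with $n$ vertices in which every directed path has length at most one (i.e. every vertex is a source or a sink) and whose span is greater than $\log_2 n/(2\log_2\log_2 n)$.
   Context: A directed tree is a DAG (directed acyclic graph) whose underlying undirected graph is a tree. A source (sink) is a vertex with no incoming (outgoing) edge. An upward-planar layered drawing of a DAG $G$ maps each vertex $v$ to a point in the plane whose y-coordinate $y(v)$ is an integer, and each edge $(u,v)$ (directed from tail $u$ to head $v$) to a strictly y-monotone curve going upward from $u$ to $v$ (so $y(u)<y(v)$), such that no two edges intersect except at common endpoints. The span of an edge $(u,v)$ in such a drawing $\Gamma$ is $y(v)-y(u)$; the span of $\Gamma$ is the maximum span of its edges; the span of an upward-planar DAG is the minimum span over all its upward-planar layered drawings. The length of a directed path is its number of edges. *)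

(* Defs.v *)
From Stdlib Require Import Reals ZArith.
From mathcomp Require Import all_boot.

Set Implicit Arguments. Unset Strict Implicit. Unset Printing Implicit Defensive.

(* A directed graph on vertex set 'I_n is an edge relation E : rel 'I_n;
   E u v means there is an edge directed from tail u to head v. *)

Definition dag (n : nat) (E : rel 'I_n) : Prop :=
  forall (u : 'I_n) (p : seq 'I_n), path E u p -> last u p = u -> p = [::].

Definition symrel (n : nat) (E : rel 'I_n) : rel 'I_n :=
  fun u v => E u v || E v u.

Definition undirected_tree (n : nat) (E : rel 'I_n) : Prop :=
  (forall u v : 'I_n, connect (symrel E) u v) /\
  (forall c : seq 'I_n, 3 <= size c -> uniq c -> ~~ cycle (symrel E) c).

Definition directed_tree (n : nat) (E : rel 'I_n) : Prop :=
  dag E /\ undirected_tree E.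

Definition paths_length_le1 (n : nat) (E : rel 'I_n) : Prop :=
  forall u v w : 'I_n, E u v -> E v w -> False.

Local Open Scope R_scope.

(* An upward-planar layered drawing: vertex v is drawn at the point
   (x v, IZR (y v)) with integer y-coordinate; the edge (u,v) is drawn as the
   strictly y-monotone curve {(g u v t, t) | IZR (y u) <= t <= IZR (y v)},
   i.e. the graph of a continuous function t |-> g u v t of the height t. *)
Definition upward_planar_layered_drawing (n : nat) (E : rel 'I_n)
    (x : 'I_n -> R) (y : 'I_n -> Z) (g : 'I_n -> 'I_n -> R -> R) : Prop :=
  (forall u v : 'I_n, x u = x v -> y u = y v -> u = v) /\
  (forall u v : 'I_n, E u v -> (y u < y v)%Z) /\
  (forall u v : 'I_n, E u v -> forall t : R, continuity_pt (g u v) t) /\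
  (forall u v : 'I_n, E u v ->
     g u v (IZR (y u)) = x u /\ g u v (IZR (y v)) = x v) /\
  (forall u v w : 'I_n, E u v -> w <> u -> w <> v ->
     IZR (y u) <= IZR (y w) <= IZR (y v) -> g u v (IZR (y w)) <> x w) /\
  (forall u v u' v' : 'I_n, E u v -> E u' v' -> (u, v) <> (u', v') ->
     forall t : R,
       IZR (y u) <= t <= IZR (y v) -> IZR (y u') <= t <= IZR (y v') ->
       g u v t = g u' v' t ->
       exists w : 'I_n, (w = u \/ w = v) /\ (w = u' \/ w = v') /\ t = IZR (y w)).

Definition upward_planar (n : nat) (E : rel 'I_n) : Prop :=
  exists x y g, @upward_planar_layered_drawing n E x y g.

(* "span of E is greater than c": E has an upward-planar layered drawing
   (so the span, a minimum over a nonempty set of naturals, is defined) and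
   every such drawing has an edge of span y v - y u greater than c. *)
Definition span_gt (n : nat) (E : rel 'I_n) (c : R) : Prop :=
  upward_planar E /\
  forall x y g, @upward_planar_layered_drawing n E x y g ->
    exists u v : 'I_n, E u v /\ IZR (y v - y u) > c.

Definition log2 (r : R) : R := ln r / ln 2.

(* Main.v *)
Require Import Defs.
From Stdlib Require Import Reals ZArith Lra Lia Classical.
From mathcomp Require Import all_boot zify.


Open Scope R_scope.

Lemma sign_fwd (f1 f2 : R -> R) a b : continuity f1 -> continuity f2 ->
  (forall t, a <= t <= b -> f1 t <> f2 t) -> a <= b -> f1 a < f2 a -> f1 b < f2 b.
Proof.
move=> c1 c2 Hne Hab Ha.
destruct (Rlt_le_dec (f1 b) (f2 b)) as [H|H]; first by [].
have cf : continuity (fun t => f1 t - f2 t) by apply: continuity_minus.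
have Hm : (f1 a - f2 a) * (f1 b - f2 b) <= 0.
  have : f1 a - f2 a < 0 by lra.
  have : 0 <= f1 b - f2 b by lra.
  nra.
destruct (IVT_cor _ _ _ cf Hab Hm) as [z [Hz Hz0]].
exfalso; apply: (Hne z Hz); lra.
Qed.

Lemma sign_bwd (f1 f2 : R -> R) a b : continuity f1 -> continuity f2 ->
  (forall t, a <= t <= b -> f1 t <> f2 t) -> a <= b -> f1 b < f2 b -> f1 a < f2 a.
Proof.
move=> c1 c2 Hne Hab Hb.
destruct (Rlt_le_dec (f1 a) (f2 a)) as [H|H]; first by [].
have cf : continuity (fun t => f1 t - f2 t) by apply: continuity_minus.
have Hm : (f1 a - f2 a) * (f1 b - f2 b) <= 0.
  have : f1 b - f2 b < 0 by lra.
  have : 0 <= f1 a - f2 a by lra.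
  nra.
destruct (IVT_cor _ _ _ cf Hab Hm) as [z [Hz Hz0]].
exfalso; apply: (Hne z Hz); lra.
Qed.

Lemma enc_src n (E : rel 'I_n) x y g :
  upward_planar_layered_drawing E x y g -> paths_length_le1 E ->
  forall v c1 c c2 p, E v c1 -> E v c -> E v c2 -> y c1 = y c -> y c2 = y c ->
  x c1 < x c -> x c < x c2 -> E p c -> p <> v -> (y v < y p)%Z.
Proof.
move=> [Dinj [Dup [Dcont [Dend [Dnv Dcr]]]]] P1 v c1 c c2 p E1 E0 E2 Y1 Y2 X1 X2 Ep pv.
destruct (Z_lt_le_dec (y v) (y p)) as [H|Hle]; first by [].
exfalso.
have cont : forall a b, E a b -> continuity (g a b) by move=> a b Hab t; apply: Dcont.
have yvc := Dup _ _ E0. have yvcR : IZR (y v) <= IZR (y c) by apply: IZR_le; lia.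
have ypv : IZR (y p) <= IZR (y v) by apply: IZR_le.
have key : forall ci, E v ci -> y ci = y c -> ci <> c -> 
   (x ci < x c -> x v < g p c (IZR (y v))) /\ (x c < x ci -> g p c (IZR (y v)) < x v).
  move=> ci Ei Yi nci.
  have Hne : forall t, IZR (y v) <= t <= IZR (y c) -> g v ci t <> g p c t.
    move=> t Ht Heq.
    have Hpr : (p, c) <> (v, ci) by move=> [].
    have Ht1 : IZR (y p) <= t <= IZR (y c) by lra.
    have Ht2 : IZR (y v) <= t <= IZR (y ci) by rewrite Yi.
    case: (Dcr _ _ _ _ Ep Ei Hpr t Ht1 Ht2 (esym Heq)) => w [[->|->] [[H1|H1] Hw]].
    - by apply: pv.
    - by subst p; apply: (P1 v ci c).
    - by subst c; lia.
    - by apply: nci.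
  have [Ea Eb] := Dend _ _ Ei. have [Ec Ed] := Dend _ _ Ep. have [Ee Ef] := Dend _ _ E0.
  split=> Hx.
  - have := @sign_bwd _ _ _ _ (cont _ _ Ei) (cont _ _ Ep) Hne yvcR.
    rewrite Ea Ed -Yi Eb; apply; lra.
  - have := @sign_bwd _ _ _ _ (cont _ _ Ep) (cont _ _ Ei) (fun t Ht e => Hne t Ht (esym e)) yvcR.
    rewrite Ea Ed -Yi Eb; apply; lra.
have n1 : c1 <> c by move=> e; subst; lra.
have n2 : c2 <> c by move=> e; subst; lra.
have := (key _ E1 Y1 n1).1 X1. have := (key _ E2 Y2 n2).2 X2. lra.
Qed.

Lemma enc_snk n (E : rel 'I_n) x y g :
  upward_planar_layered_drawing E x y g -> paths_length_le1 E ->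
  forall v c1 c c2 q, E c1 v -> E c v -> E c2 v -> y c1 = y c -> y c2 = y c ->
  x c1 < x c -> x c < x c2 -> E c q -> q <> v -> (y q < y v)%Z.
Proof.
move=> [Dinj [Dup [Dcont [Dend [Dnv Dcr]]]]] P1 v c1 c c2 q E1 E0 E2 Y1 Y2 X1 X2 Eq qv.
destruct (Z_lt_le_dec (y q) (y v)) as [H|Hle]; first by [].
exfalso.
have cont : forall a b, E a b -> continuity (g a b) by move=> a b Hab t; apply: Dcont.
have yvc := Dup _ _ E0. have yvcR : IZR (y c) <= IZR (y v) by apply: IZR_le; lia.
have ypv : IZR (y v) <= IZR (y q) by apply: IZR_le.
have key : forall ci, E ci v -> y ci = y c -> ci <> c -> 
   (x ci < x c -> x v < g c q (IZR (y v))) /\ (x c < x ci -> g c q (IZR (y v)) < x v).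
  move=> ci Ei Yi nci.
  have Hne : forall t, IZR (y c) <= t <= IZR (y v) -> g ci v t <> g c q t.
    move=> t Ht Heq.
    have Hpr : (c, q) <> (ci, v) by move=> [].
    have Ht1 : IZR (y c) <= t <= IZR (y q) by lra.
    have Ht2 : IZR (y ci) <= t <= IZR (y v) by rewrite Yi.
    case: (Dcr _ _ _ _ Eq Ei Hpr t Ht1 Ht2 (esym Heq)) => w [[->|->] [[H1|H1] Hw]].
    - by apply: nci.
    - by subst c; lia.
    - by subst q; apply: (P1 c ci v).
    - by apply: qv.
  have [Ea Eb] := Dend _ _ Ei. have [Ec Ed] := Dend _ _ Eq. have [Ee Ef] := Dend _ _ E0.
  split=> Hx.
  - have := @sign_fwd _ _ _ _ (cont _ _ Ei) (cont _ _ Eq) Hne yvcR.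
    rewrite Ec -Yi Ea Eb; apply; lra.
  - have := @sign_fwd _ _ _ _ (cont _ _ Eq) (cont _ _ Ei) (fun t Ht e => Hne t Ht (esym e)) yvcR.
    rewrite Ec -Yi Ea Eb; apply; lra.
have n1 : c1 <> c by move=> e; subst; lra.
have n2 : c2 <> c by move=> e; subst; lra.
have := (key _ E1 Y1 n1).1 X1. have := (key _ E2 Y2 n2).2 X2. lra.
Qed.

Close Scope R_scope.

Lemma pigeon3 K : forall (s : seq nat) (f : nat -> nat), uniq s ->
  (forall r, r \in s -> 0 < f r <= K) -> 2 * K < size s ->
  exists r1 r2 r3, [/\ r1 \in s, r2 \in s, r3 \in s,
    [/\ r1 != r2, r1 != r3 & r2 != r3] & (f r1 = f r2 /\ f r2 = f r3)].
Proof.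
elim: K => [|K IH] s f us Hf Hs.
  case: s us Hf Hs => [|r s] // _ Hf _.
  have := Hf r (mem_head _ _); lia.
set A := [seq r <- s | f r == K.+1].
have Hsum : size A + size [seq r <- s | f r != K.+1] = size s.
  by rewrite /A !size_filter; apply: (count_predC (fun r => f r == K.+1)).
have Hf' : forall r, r \in [seq r <- s | f r != K.+1] -> 0 < f r <= K.
  by move=> r; rewrite mem_filter => /andP[/eqP ne /Hf]; lia.
case HA: A => [|r1 [|r2 [|r3 A']]].
- have : size [seq r <- s | f r != K.+1] = size s.
    rewrite HA /= in Hsum; lia.
  move=> Hsz.
  have [r1 [r2 [r3 [m1 m2 m3 d e]]]] := IH [seq r <- s | f r != K.+1] f (filter_uniq _ us)
    Hf' ltac:(lia).
  move: m1 m2 m3; rewrite !mem_filter => /andP[_ m1] /andP[_ m2] /andP[_ m3].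
  by exists r1, r2, r3.
- have : size [seq r <- s | f r != K.+1] = (size s).-1.
    rewrite HA /= in Hsum; lia.
  move=> Hsz.
  have [r1' [r2' [r3' [m1 m2 m3 d e]]]] := IH [seq r <- s | f r != K.+1] f (filter_uniq _ us)
    Hf' ltac:(lia).
  move: m1 m2 m3; rewrite !mem_filter => /andP[_ m1] /andP[_ m2] /andP[_ m3].
  by exists r1', r2', r3'.
- have : size [seq r <- s | f r != K.+1] = (size s).-2.
    rewrite HA /= in Hsum; lia.
  move=> Hsz.
  have [r1' [r2' [r3' [m1 m2 m3 d e]]]] := IH [seq r <- s | f r != K.+1] f (filter_uniq _ us)
    Hf' ltac:(lia).
  move: m1 m2 m3; rewrite !mem_filter => /andP[_ m1] /andP[_ m2] /andP[_ m3].
  by exists r1', r2', r3'.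
- have uA : uniq A by apply: filter_uniq.
  have mA : forall r, r \in A -> (r \in s) && (f r == K.+1) by move=> r; rewrite mem_filter andbC.
  rewrite HA in uA mA.
  move: uA => /= /andP[n1 /andP[n2 _]].
  move: n1 n2; rewrite !inE !negb_or => /andP[d12 /andP[d13 _]] /andP[d23 _].
  have /andP[m1 /eqP e1] := mA r1 (mem_head _ _).
  have /andP[m2 /eqP e2] := mA r2 ltac:(by rewrite !inE eqxx orbT).
  have /andP[m3 /eqP e3] := mA r3 ltac:(by rewrite !inE eqxx !orbT).
  exists r1, r2, r3; split => //.
  by rewrite e1 e2 e3.
Qed.

Set Implicit Arguments. Unset Strict Implicit.

Definition L (b D : nat) : seq (nat * nat) :=
  [seq p <- allpairs pair (iota 0 D.+1) (iota 0 (b ^ D)) | p.2 < b ^ p.1].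

Lemma mem_L b D p : 0 < b -> (p \in L b D) = (p.1 <= D) && (p.2 < b ^ p.1).
Proof.
move=> b0; case: p => k j; rewrite mem_filter.
case Hin: ((k, j) \in allpairs pair (iota 0 D.+1) (iota 0 (b ^ D))).
  move/allpairsP: Hin => [[k' j'] [Hk Hj [-> ->]]].
  move: Hk Hj; rewrite !mem_iota /= => Hk Hj; apply/idP/idP; rewrite andbT.
    by move=> ->; rewrite andbT; lia.
  by case/andP.
rewrite andbF; symmetry; apply/negbTE/negP => /andP[Hk Hj].
move/negbT/negP: Hin; apply; apply: allpairs_f; rewrite mem_iota /=; move: Hk Hj => /= Hk Hj; first lia.
have := leq_pexp2l b0 Hk; lia.
Qed.

Lemma uniq_L b D : uniq (L b D).
Proof.
apply: filter_uniq; apply: allpairs_uniq; try apply: iota_uniq.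
by move=> [a1 a2] [c1 c2] _ _ /= [-> ->].
Qed.

Definition tch (b : nat) (p q : nat * nat) : bool := (q.1 == p.1.+1) && (q.2 %/ b == p.2).
Definition Erel (b : nat) (p q : nat * nat) : bool :=
  (tch b p q && ~~ odd p.1) || (tch b q p && odd q.1).

Definition vpos b D (u : 'I_(size (L b D))) : nat * nat := nth (0, 0) (L b D) u.
Definition Et b D : rel 'I_(size (L b D)) := fun u v => Erel b (vpos u) (vpos v).
Arguments Et : clear implicits.

Lemma pos_in b D (u : 'I_(size (L b D))) : vpos u \in L b D.
Proof. by apply: mem_nth. Qed.

Lemma pos_inj b D (u v : 'I_(size (L b D))) : vpos u = vpos v -> u = v.
Proof.
move=> e; apply: val_inj => /=; apply/eqP.
by rewrite -(nth_uniq (0,0) (ltn_ord u) (ltn_ord v) (uniq_L b D)); move: e; rewrite /vpos => ->.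
Qed.

Definition vtx b D (u0 : 'I_(size (L b D))) (p : nat * nat) : 'I_(size (L b D)) :=
  insubd u0 (index p (L b D)).

Lemma pos_vtx b D (u0 : 'I_(size (L b D))) p : p \in L b D -> vpos (vtx u0 p) = p.
Proof.
move=> Hp; rewrite /vpos /vtx val_insubd index_mem Hp.
by apply: nth_index.
Qed.


Lemma Et_par b D (u v : 'I_(size (L b D))) : Et b D u v -> ~~ odd (vpos u).1 /\ odd (vpos v).1.
Proof.
rewrite /Et /Erel /tch; case: (vpos u) => k j; case: (vpos v) => k' j' /=.
case/orP => /andP[/andP[/eqP e _] h].
  by subst; rewrite /= h.
by subst; rewrite /= h negbK.
Qed.

Lemma Et_pl1 b D : paths_length_le1 (Et b D).
Proof.
move=> u v w /Et_par [_ h1] /Et_par [h2 _]; by rewrite h1 in h2.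
Qed.

Lemma Et_dag b D : dag (Et b D).
Proof.
move=> u [|a p] //= /andP[Hua Hp] Hl; exfalso.
case: p Hp Hl => [|a' p] /=.
  move=> _ e; subst a; have [h1 h2] := Et_par Hua; by rewrite h2 in h1.
move=> /andP[Ha _] _; exact: (Et_pl1 Hua Ha).
Qed.

Lemma sym_Et b D (u v : 'I_(size (L b D))) :
  symrel (Et b D) u v = tch b (vpos u) (vpos v) || tch b (vpos v) (vpos u).
Proof.
rewrite /symrel /Et /Erel.
by case: (tch b (vpos u) (vpos v)); case: (tch b (vpos v) (vpos u));
   case: (odd (vpos u).1); case: (odd (vpos v).1).
Qed.

Lemma conn_root b D (r : 'I_(size (L b D))) : 0 < b -> vpos r = (0, 0) ->
  forall k (u : 'I_(size (L b D))), (vpos u).1 = k -> connect (symrel (Et b D)) u r.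
Proof.
move=> b0 Hr; elim=> [|k IH] u Hu.
  have Hin := pos_in u; rewrite mem_L // in Hin.
  have : vpos u = vpos r.
    case Hp: (vpos u) Hu Hin => [k1 j] /= Hk /andP[_ Hj]; subst k1.
    rewrite expn0 in Hj; rewrite Hr; congr pair; lia.
  by move/pos_inj => ->; apply: connect0.
have Hin := pos_in u; rewrite mem_L // in Hin.
case Hp: (vpos u) Hu Hin => [k1 j] /= Hk /andP[HD Hj]; subst k1.
have Hpar : (k, j %/ b) \in L b D.
  rewrite mem_L //=; apply/andP; split; first lia.
  by rewrite ltn_divLR // -expnSr.
apply: (connect_trans (y := vtx u (k, j %/ b))).
  apply: connect1; rewrite sym_Et pos_vtx // Hp /tch /= !eqxx /=; by rewrite orbT.
by apply: IH; rewrite pos_vtx.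
Qed.

Lemma tch_par b (p q r : nat * nat) : tch b p r -> tch b q r -> p = q.
Proof.
rewrite /tch; case: p => ? ?; case: q => ? ?; case: r => ? ? /=.
move=> /andP[/eqP e1 /eqP e2] /andP[/eqP e3 /eqP e4]; congr pair; lia.
Qed.

Lemma Et_nocycle b D (c : seq 'I_(size (L b D))) :
  3 <= size c -> uniq c -> ~~ cycle (symrel (Et b D)) c.
Proof.
move=> Hs Hu; apply/negP => Hc.
case: c Hs Hu Hc => [|i0 c0] // Hs Hu Hc.
set c := i0 :: c0 in Hs Hu Hc.
have [m Hm Hmax] := @arg_maxnP _ i0 (fun i => i \in c) (fun i => (vpos i).1) (mem_head _ _).
set i := index m c.
have Hi : i < size c by rewrite index_mem.
have Hrot : rot i c = m :: (drop i.+1 c ++ take i c).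
  by rewrite /rot (drop_nth m Hi) nth_index.
have Hc' := Hc; rewrite -(rot_cycle i) Hrot in Hc'.
have Hu' := Hu; rewrite -(rot_uniq i) Hrot in Hu'.
have Hsz : size (drop i.+1 c ++ take i c) = (size c).-1.
  by rewrite size_cat size_drop size_take Hi; lia.
have Hmem : forall z, z \in drop i.+1 c ++ take i c -> z \in c.
  by move=> z Hz; rewrite -(mem_rot i) Hrot inE Hz orbT.
case Hr: (drop i.+1 c ++ take i c) Hsz Hmem Hc' Hu' => [|a [|a' r]] //= Hsz;
  try by move=> *; rewrite /c /= in Hs; lia.
move=> Hmem /and3P[Hma _ Hp] /and4P[Hmn Han _ _].
rewrite rcons_path in Hp; move: Hp => /andP[_ Hzm].
set z := last a' r in Hzm.
have Hz : z \in a' :: r by apply: mem_last.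
have Hda := Hmax a (Hmem a (mem_head _ _)).
have Hdz := Hmax z (Hmem z ltac:(by rewrite inE Hz orbT)).
have Ta : tch b (vpos a) (vpos m).
  move: Hma; rewrite sym_Et => /orP[H|//]; move: H Hda; rewrite /tch => /andP[/eqP -> _]; lia.
have Tz : tch b (vpos z) (vpos m).
  move: Hzm; rewrite sym_Et => /orP[//|H]; move: H Hdz; rewrite /tch => /andP[/eqP -> _]; lia.
have e : a = z by apply: pos_inj; apply: (tch_par Ta Tz).
by move: Han; rewrite e Hz.
Qed.

Lemma Et_tree b D : 0 < b -> directed_tree (Et b D).
Proof.
move=> b0; split; first exact: Et_dag.
have Hr : (0, 0) \in L b D by rewrite mem_L // expn0.
split.
  move=> u v.
  set r := vtx u (0, 0).
  have Hpr : vpos r = (0, 0) by rewrite pos_vtx.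
  have symE : symmetric (symrel (Et b D)) by move=> x y; rewrite /symrel orbC.
  apply: connect_trans (conn_root b0 Hpr (erefl _)) _.
  rewrite (sym_connect_sym symE); exact: (conn_root b0 Hpr (erefl _)).
exact: Et_nocycle.
Qed.


Definition Yn (b D : nat) (p : nat * nat) : nat :=
  b ^ (D - p.1) * p.2 + (if odd p.1 then b ^ D else 0).

Lemma Yn_mono b D p q : 0 < b -> p.1 = q.1 -> p.2 < q.2 -> Yn b D p < Yn b D q.
Proof.
move=> b0; case: p => k j; case: q => k' j' /= <- Hj; rewrite /Yn /=.
have : 0 < b ^ (D - k) by rewrite expn_gt0 b0.
nia.
Qed.

Lemma Yn_inj b D p q : 0 < b -> p.1 = q.1 -> Yn b D p = Yn b D q -> p = q.
Proof.
move=> b0 e1 e2; case: p q e1 e2 => k j [k' j'] /= e1 e2; subst k'.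
case: (ltngtP j j') => H.
- by have := Yn_mono D b0 (p := (k, j)) (q := (k, j')) erefl H; rewrite e2 ltnn.
- by have := Yn_mono D b0 (p := (k, j')) (q := (k, j)) erefl H; rewrite e2 ltnn.
- by rewrite H.
Qed.

Lemma Yn_edge b D p q : 0 < b -> tch b p q -> q.1 <= D ->
  (~~ odd p.1 -> Yn b D p < Yn b D q) /\ (odd p.1 -> Yn b D q < Yn b D p).
Proof.
move=> b0; case: p => k j; case: q => k' j'; rewrite /tch /Yn /= => /andP[/eqP e /eqP hj] hD.
subst k'.
have ej : j' = j * b + j' %% b by rewrite -hj; apply: divn_eq.
have hr : j' %% b < b by rewrite ltn_mod.
have eD : b ^ (D - k) = b ^ (D - k.+1) * b by rewrite -expnSr; congr expn; lia.
have hpos : 0 < b ^ (D - k.+1) by rewrite expn_gt0 b0.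
have hle : b ^ (D - k) <= b ^ D by apply: leq_pexp2l => //; lia.
split => Ho; rewrite /=.
  have hB : 0 < b ^ D by rewrite expn_gt0 b0.
  rewrite (negbTE Ho) eD ej /=; nia.
rewrite Ho eD ej /=.
have : b ^ (D - k.+1) * (j' %% b) < b ^ (D - k.+1) * b by rewrite ltn_pmul2l.
nia.
Qed.

Lemma tch_child_mono b p1 q1 p2 q2 : tch b p1 q1 -> tch b p2 q2 -> p1.2 < p2.2 -> q1.2 < q2.2.
Proof.
rewrite /tch => /andP[_ /eqP e1] /andP[_ /eqP e2] H.
rewrite ltnNge; apply/negP => H'.
have := leq_div2r b H'; rewrite e1 e2; lia.
Qed.

Open Scope R_scope.

Definition xd b D (u : 'I_(size (L b D))) : R := INR (vpos u).1.
Definition yd b D (u : 'I_(size (L b D))) : Z := Z.of_nat (Yn b D (vpos u)).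
Definition gd b D (u v : 'I_(size (L b D))) (t : R) : R :=
  xd u + (xd v - xd u) / (IZR (yd v) - IZR (yd u)) * (t - IZR (yd u)).

Lemma IZR_yd b D (u : 'I_(size (L b D))) : IZR (yd u) = INR (Yn b D (vpos u)).
Proof. by rewrite /yd -INR_IZR_INZ. Qed.

Lemma edge_view b D (u v : 'I_(size (L b D))) : Et b D u v ->
  exists P C, tch b (vpos P) (vpos C) /\
   ((u = P /\ v = C /\ ~~ odd (vpos P).1) \/ (u = C /\ v = P /\ odd (vpos P).1)).
Proof.
rewrite /Et /Erel => /orP[/andP[h1 h2]|/andP[h1 h2]].
  by exists u, v; split => //; left.
by exists v, u; split => //; right.
Qed.

Lemma interp_param (a yP yC t : R) : yP <> yC ->
  (yP <= t <= yC \/ yC <= t <= yP) ->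
  exists l, 0 <= l <= 1 /\ t = yP + l * (yC - yP) /\
    a + ((a + 1) - a) / (yC - yP) * (t - yP) = a + l /\
    (a + 1) + (a - (a + 1)) / (yP - yC) * (t - yC) = a + l.
Proof.
move=> hne ht.
have hd : yC - yP <> 0 by lra.
have hd' : yP - yC <> 0 by lra.
exists ((t - yP) / (yC - yP)).
have e : (t - yP) / (yC - yP) * (yC - yP) = t - yP by field.
split; last split; last split.
- set l := (t - yP) / (yC - yP) in e *.
  case: ht => ht.
    have hp : 0 < yC - yP by lra.
    split; nra.
  have hp : yC - yP < 0 by lra.
  split; nra.
- lra.
- field; lra.
- field; lra.
Qed.

Lemma INR_step (a c : nat) (l1 l2 : R) : 0 <= l1 <= 1 -> 0 <= l2 <= 1 ->
  INR a + l1 = INR c + l2 ->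
  (a = c /\ l1 = l2) \/ (c = a.+1 /\ l1 = 1 /\ l2 = 0) \/ (a = c.+1 /\ l1 = 0 /\ l2 = 1).
Proof.
move=> h1 h2 e.
case: (ltngtP a c) => H.
- have [H'|H'] : c = a.+1 \/ (a.+2 <= c)%N by lia.
    subst c; rewrite S_INR in e; right; left; split => //; lra.
  have := le_INR _ _ (elimT leP H'); rewrite !S_INR; lra.
- have [H'|H'] : a = c.+1 \/ (c.+2 <= a)%N by lia.
    subst a; rewrite S_INR in e; right; right; split => //; lra.
  have := le_INR _ _ (elimT leP H'); rewrite !S_INR; lra.
- subst; left; split => //; lra.
Qed.

Lemma edge_basic b D (P C : 'I_(size (L b D))) : (0 < b)%N -> tch b (vpos P) (vpos C) ->
  (vpos C).1 = (vpos P).1.+1 /\ xd C = xd P + 1 /\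
  (~~ odd (vpos P).1 -> (Yn b D (vpos P) < Yn b D (vpos C))%N) /\
  (odd (vpos P).1 -> (Yn b D (vpos C) < Yn b D (vpos P))%N).
Proof.
move=> b0 T.
have e : (vpos C).1 = (vpos P).1.+1 by move: T; rewrite /tch => /andP[/eqP -> _].
have hC := pos_in C; rewrite mem_L // in hC; move: hC => /andP[hD _].
have [h1 h2] := Yn_edge (D:=D) b0 T hD.
by rewrite /xd e S_INR.
Qed.

Lemma edge_param b D (u v : 'I_(size (L b D))) (t : R) : (0 < b)%N -> Et b D u v ->
  IZR (yd u) <= t <= IZR (yd v) ->
  exists P C l, tch b (vpos P) (vpos C) /\
   ((u = P /\ v = C /\ ~~ odd (vpos P).1) \/ (u = C /\ v = P /\ odd (vpos P).1)) /\
   0 <= l <= 1 /\ t = INR (Yn b D (vpos P)) + l * (INR (Yn b D (vpos C)) - INR (Yn b D (vpos P))) /\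
   gd u v t = xd P + l.
Proof.
move=> b0 /edge_view [P [C [T H]]] ht.
have [eC [xC [y1 y2]]] := edge_basic b0 T.
rewrite !IZR_yd in ht.
have hne : INR (Yn b D (vpos P)) <> INR (Yn b D (vpos C)).
  move/INR_eq => e; case: (boolP (odd (vpos P).1)) => o.
    by have := y2 o; rewrite e ltnn.
  by have := y1 o; rewrite e ltnn.
case: H => [[eu [ev o]]|[eu [ev o]]]; subst u v.
- have [l [hl [et [g1 g2]]]] := interp_param (xd P) hne (or_introl ht).
  exists P, C, l; split => //; split; first by left.
  by split => //; split => //; rewrite /gd !IZR_yd xC.
- have [l [hl [et [g1 g2]]]] := interp_param (xd P) hne (or_intror ht).
  exists P, C, l; split => //; split; first by right.
  by split => //; split => //; rewrite /gd !IZR_yd xC.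
Qed.

Lemma YR_inj b D (u v : 'I_(size (L b D))) : (0 < b)%N -> (vpos u).1 = (vpos v).1 ->
  INR (Yn b D (vpos u)) = INR (Yn b D (vpos v)) -> u = v.
Proof.
move=> b0 e1 /INR_eq e2; apply: pos_inj; exact: Yn_inj b0 e1 e2.
Qed.

Lemma orient_mem (T : Type) (u v P C : T) (o : bool) :
  (u = P /\ v = C /\ ~~ o) \/ (u = C /\ v = P /\ o) ->
  (P = u \/ P = v) /\ (C = u \/ C = v).
Proof. by case=> [[-> [-> _]]|[-> [-> _]]]; split; auto. Qed.

Lemma conv_pos (l a1 a2 c1 c2 : R) : 0 <= l <= 1 -> a1 < a2 -> c1 < c2 ->
  a1 + l * (c1 - a1) <> a2 + l * (c2 - a2).
Proof.
move=> hl h1 h2 e.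
have m1 : 0 <= (1 - l) * (a2 - a1 - Rmin (a2 - a1) (c2 - c1)).
  apply: Rmult_le_pos; first lra.
  have := Rmin_l (a2 - a1) (c2 - c1); lra.
have m2 : 0 <= l * (c2 - c1 - Rmin (a2 - a1) (c2 - c1)).
  apply: Rmult_le_pos; first lra.
  have := Rmin_r (a2 - a1) (c2 - c1); lra.
have m3 : 0 < Rmin (a2 - a1) (c2 - c1) by apply: Rmin_glb_lt; lra.
nra.
Qed.

Lemma drawing b D : (0 < b)%N ->
  upward_planar_layered_drawing (Et b D) (@xd b D) (@yd b D) (@gd b D).
Proof.
move=> b0.
split.
  move=> u v /INR_eq e1 /Nat2Z.inj e2; apply: pos_inj; exact: Yn_inj b0 e1 e2.
split.
  move=> u v /edge_view [P [C [T [[-> [-> o]]|[-> [-> o]]]]]];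
  have [_ [_ [y1 y2]]] := edge_basic b0 T; apply/Nat2Z.inj_lt; apply/ltP.
    exact: y1.
  exact: y2.
split.
  move=> u v _ t; rewrite /gd; reg.
split.
  move=> u v Huv.
  have hne : IZR (yd v) - IZR (yd u) <> 0.
    have : (yd u < yd v)%Z.
      move: Huv => /edge_view [P [C [T [[-> [-> o]]|[-> [-> o]]]]]];
      have [_ [_ [y1 y2]]] := edge_basic b0 T; apply/Nat2Z.inj_lt; apply/ltP.
        exact: y1.
      exact: y2.
    move/IZR_lt; lra.
  rewrite /gd; split; [ring | field; exact: hne].
split.
  move=> u v w Huv wu wv ht Heq.
  have [P [C [l [T [O [hl [et hg]]]]]]] := edge_param b0 Huv ht.
  have [mP mC] := orient_mem O.
  have [eC [xC _]] := edge_basic b0 T.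
  rewrite hg /xd in Heq.
  have := @INR_step (vpos P).1 (vpos w).1 l 0 hl ltac:(lra) ltac:(lra).
  case=> [[ek el]|[[ek [el _]]|[_ [_ bad]]]]; last lra.
  - subst l; have eP : w = P.
      apply: YR_inj => //; rewrite -IZR_yd et; lra.
    by subst; case: mP.
  - subst l; have eP : w = C.
      apply: YR_inj => //; first by rewrite eC ek.
      rewrite -IZR_yd et; lra.
    by subst; case: mC.
move=> u v u' v' E1 E2 Hne t ht1 ht2 Heq.
have [P1 [C1 [l1 [T1 [O1 [hl1 [et1 hg1]]]]]]] := edge_param b0 E1 ht1.
have [P2 [C2 [l2 [T2 [O2 [hl2 [et2 hg2]]]]]]] := edge_param b0 E2 ht2.
have [mP1 mC1] := orient_mem O1. have [mP2 mC2] := orient_mem O2.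
have [eC1 [xC1 [y11 y12]]] := edge_basic b0 T1.
have [eC2 [xC2 [y21 y22]]] := edge_basic b0 T2.
rewrite hg1 hg2 /xd in Heq.
have := @INR_step (vpos P1).1 (vpos P2).1 l1 l2 hl1 hl2 Heq.
case=> [[ek el]|[[ek [el1 el2]]|[ek [el1 el2]]]].
- subst l2.
  case: (eqVneq P1 P2) => eP.
    subst P2.
    case: (eqVneq C1 C2) => eC.
      subst C2; exfalso; apply: Hne.
      by case: O1 => [[-> [-> o1]]|[-> [-> o1]]]; case: O2 => [[-> [-> o2]]|[-> [-> o2]]] //;
        move: o1 o2; case: odd.
    have hYC : INR (Yn b D (vpos C1)) <> INR (Yn b D (vpos C2)).
      by move=> e; move/eqP: eC; apply; apply: YR_inj => //; rewrite eC1 eC2.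
    have l0 : l1 = 0.
      have : l1 * (INR (Yn b D (vpos C1)) - INR (Yn b D (vpos C2))) = 0 by lra.
      case/Rmult_integral => // h; exfalso; apply: hYC; lra.
    exists P1; split => //; split => //; rewrite IZR_yd et1 l0; ring.
  have ej : (vpos P1).2 <> (vpos P2).2.
    move=> ej; move/eqP: eP; apply; apply: pos_inj; move: ek ej.
    by case: (vpos P1) => ? ?; case: (vpos P2) => ? ? /= -> ->.
  exfalso.
  have key : forall (A1 A2 B1 B2 : 'I_(size (L b D))),
      tch b (vpos A1) (vpos B1) -> tch b (vpos A2) (vpos B2) ->
      (vpos A1).1 = (vpos A2).1 -> ((vpos A1).2 < (vpos A2).2)%N ->
      INR (Yn b D (vpos A1)) < INR (Yn b D (vpos A2)) /\
      INR (Yn b D (vpos B1)) < INR (Yn b D (vpos B2)).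
    move=> A1 A2 B1 B2 TA TB ea lt.
    have [eB1 _] := edge_basic b0 TA. have [eB2 _] := edge_basic b0 TB.
    split; apply: lt_INR; apply/ltP; apply: Yn_mono => //.
      by rewrite eB1 eB2 ea.
    exact: tch_child_mono TA TB lt.
  case: (ltngtP (vpos P1).2 (vpos P2).2) => lt //.
    have [h1 h2] := key _ _ _ _ T1 T2 ek lt.
    rewrite et1 in et2; apply: (conv_pos hl1 h1 h2); lra.
  have [h1 h2] := key _ _ _ _ T2 T1 (esym ek) lt.
  rewrite et1 in et2; apply: (conv_pos hl1 h1 h2); lra.
- subst l1 l2.
  have eCP : C1 = P2.
    apply: YR_inj => //; first by rewrite eC1 ek.
    lra.
  exists C1; split => //; split; first by rewrite eCP.
  rewrite IZR_yd et1; ring.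
- subst l1 l2.
  have eCP : C2 = P1.
    apply: YR_inj => //; first by rewrite eC2 ek.
    lra.
  exists C2; split; first by rewrite eCP.
  split => //; rewrite IZR_yd et2; ring.
Qed.


Close Scope R_scope.

Lemma exL b D p : p \in L b D -> exists u : 'I_(size (L b D)), vpos u = p.
Proof.
move=> Hp; exists (Ordinal (elimT idP (eq_ind_r (fun z => is_true z) Hp (index_mem p (L b D))))).
by rewrite /vpos /= nth_index.
Qed.

Lemma tch_Et b D (p c : 'I_(size (L b D))) : tch b (vpos p) (vpos c) ->
  (~~ odd (vpos p).1 -> Et b D p c) /\ (odd (vpos p).1 -> Et b D c p).
Proof.
move=> T; split => o; rewrite /Et /Erel.
  by rewrite T o.
by rewrite T o orbT.
Qed.

Open Scope R_scope.

Lemma mid3 (T : Type) (X : T -> R) c1 c2 c3 :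
  X c1 <> X c2 -> X c1 <> X c3 -> X c2 <> X c3 ->
  exists a m z, [/\ a = c1 \/ a = c2 \/ a = c3, m = c1 \/ m = c2 \/ m = c3,
     z = c1 \/ z = c2 \/ z = c3 & X a < X m < X z].
Proof.
move=> h12 h13 h23.
case: (Rlt_or_le (X c1) (X c2)) => a12; case: (Rlt_or_le (X c1) (X c3)) => a13;
case: (Rlt_or_le (X c2) (X c3)) => a23.
- exists c1, c2, c3; split; auto; lra.
- exists c1, c3, c2; split; auto; lra.
- exfalso; lra.
- exists c3, c1, c2; split; auto; lra.
- exists c2, c1, c3; split; auto; lra.
- exfalso; lra.
- exists c2, c3, c1; split; auto; lra.
- exists c3, c2, c1; split; auto; lra.
Qed.

Close Scope R_scope.

Definition Good b D (y : 'I_(size (L b D)) -> Z) (v : 'I_(size (L b D))) (d : Z) : Prop :=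
  forall w, tch b (vpos v) (vpos w) -> (Z.abs (y w - y v) < d)%Z.

Lemma step b D S x y g :
  upward_planar_layered_drawing (Et b D) x y g -> (2 * S < b)%N ->
  forall (v : 'I_(size (L b D))) (d : Z), (d <= Z.of_nat S + 1)%Z -> ((vpos v).1 < D)%N ->
  Good y v d -> exists w, tch b (vpos v) (vpos w) /\ (vpos w).1 = (vpos v).1.+1 /\ Good y w (d - 1).
Proof.
move=> HD hb v d hd hk Hg.
have HD' := HD; move: HD' => [Dinj [Dup _]].
have b0 : (0 < b)%N by lia.
set k := (vpos v).1 in hk *; set j := (vpos v).2.
set child := fun r => vtx v (k.+1, j * b + r).
have Hch : forall r, (r < b)%N -> vpos (child r) = (k.+1, j * b + r) /\ tch b (vpos v) (vpos (child r)).
  move=> r hr.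
  have hin : (k.+1, j * b + r) \in L b D.
    rewrite mem_L //=; apply/andP; split; first lia.
    have := pos_in v; rewrite mem_L // => /andP[_ hj]; rewrite -/k -/j in hj.
    rewrite expnSr; nia.
  have e := pos_vtx v hin; split => //.
  rewrite e /tch /= -/k -/j eqxx /= divnMDl // divn_small // addn0 eqxx //.
have Hedge : forall r, (r < b)%N -> (~~ odd k -> Et b D v (child r)) /\ (odd k -> Et b D (child r) v).
  by move=> r hr; have [_ T] := Hch r hr; exact: tch_Et T.
set gap := fun r => Z.to_nat (Z.abs (y (child r) - y v)).
have Hy : forall r, (r < b)%N ->
    (~~ odd k -> y (child r) = (y v + Z.of_nat (gap r))%Z) /\
    (odd k -> y (child r) = (y v - Z.of_nat (gap r))%Z).
  move=> r hr; have [h1 h2] := Hedge r hr; rewrite /gap; split => o.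
    have := Dup _ _ (h1 o); lia.
  have := Dup _ _ (h2 o); lia.
have Hgap : forall r, r \in iota 0 b -> (0 < gap r <= S)%N.
  move=> r; rewrite mem_iota /= => hr.
  have [_ T] := Hch r hr; have := Hg _ T.
  have [h1 h2] := Hedge r hr.
  case: (boolP (odd k)) => o.
    have := Dup _ _ (h2 o); rewrite /gap; lia.
  have := Dup _ _ (h1 o); rewrite /gap; lia.
have [r1 [r2 [r3 [m1 m2 m3 [d12 d13 d23] [e12 e23]]]]] :=
  @pigeon3 S (iota 0 b) gap (iota_uniq 0 b) Hgap ltac:(rewrite size_iota; lia).
move: m1 m2 m3; rewrite !mem_iota /= => m1 m2 m3.
set Y0 := y (child r1).
have Pc : forall r, r \in [:: r1; r2; r3] -> (r < b)%N /\ y (child r) = Y0.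
  move=> r; rewrite !inE => /orP[/eqP->|/orP[/eqP->|/eqP->]]; split => //;
  rewrite /Y0; case: (boolP (odd k)) => o;
  rewrite ?((Hy _ m1).1 o) ?((Hy _ m2).1 o) ?((Hy _ m3).1 o)
          ?((Hy _ m1).2 o) ?((Hy _ m2).2 o) ?((Hy _ m3).2 o) ?e12 ?e23 //.
have dch : forall r r', (r < b)%N -> (r' < b)%N -> r != r' -> child r <> child r'.
  move=> r r' hr hr' ne e.
  have := f_equal (@vpos b D) e; rewrite (Hch r hr).1 (Hch r' hr').1 => [[e']].
  by move/eqP: ne; apply; lia.
have xd : forall r r', r \in [:: r1; r2; r3] -> r' \in [:: r1; r2; r3] -> r != r' ->
    x (child r) <> x (child r').
  move=> r r' hr hr' ne ex.
  have [b1 y1] := Pc r hr; have [b2 y2] := Pc r' hr'.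
  apply: (dch r r' b1 b2 ne); apply: Dinj => //; by rewrite y1 y2.
have i1 : r1 \in [:: r1; r2; r3] by rewrite !inE eqxx.
have i2 : r2 \in [:: r1; r2; r3] by rewrite !inE eqxx orbT.
have i3 : r3 \in [:: r1; r2; r3] by rewrite !inE eqxx !orbT.
have [a [m [z [ma mm mz [xam xmz]]]]] := mid3 (xd _ _ i1 i2 d12) (xd _ _ i1 i3 d13) (xd _ _ i2 i3 d23).
have Hc : forall c, c = child r1 \/ c = child r2 \/ c = child r3 ->
    exists r, (r < b)%N /\ c = child r /\ y c = Y0.
  move=> c [->|[->|->]]; [exists r1 | exists r2 | exists r3];
    (split; [done | split; [done | ]]); [exact: (Pc _ i1).2 | exact: (Pc _ i2).2 | exact: (Pc _ i3).2].
have [ra [hra [ea ya]]] := Hc a ma.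
have [rm [hrm [em ym]]] := Hc m mm.
have [rz [hrz [ez yz]]] := Hc z mz.
have [pm Tm] := Hch rm hrm.
exists m; rewrite em; split => //; split; first by rewrite pm.
move=> w Tw.
have hwv : w <> v.
  move=> e; subst w; move: Tw; rewrite pm /tch /= => /andP[/eqP]; lia.
have Hvm := Hg _ Tm.
have [Ew1 Ew2] := tch_Et Tw.
rewrite pm /= in Ew1 Ew2.
have HP1 := Et_pl1 (b := b) (D := D).
case: (boolP (odd k)) => o.
  have Ea := (Hedge ra hra).2 o. have Em := (Hedge rm hrm).2 o. have Ez := (Hedge rz hrz).2 o.
  have Emw := Ew1 ltac:(by rewrite /= o).
  have := @enc_snk _ _ _ _ _ HD HP1 _ _ _ _ _ Ea Em Ez
    ltac:(by rewrite -ea -em ya ym) ltac:(by rewrite -ez -em yz ym)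
    ltac:(by rewrite -ea -em) ltac:(by rewrite -em -ez) Emw hwv.
  have := Dup _ _ Emw. have := Dup _ _ Em. move=> A1 A2 A3; clear -A1 A2 A3 Hvm; lia.
have Ea := (Hedge ra hra).1 o. have Em := (Hedge rm hrm).1 o. have Ez := (Hedge rz hrz).1 o.
have Ewm := Ew2 ltac:(by rewrite /= o).
have := @enc_src _ _ _ _ _ HD HP1 _ _ _ _ _ Ea Em Ez
  ltac:(by rewrite -ea -em ya ym) ltac:(by rewrite -ez -em yz ym)
  ltac:(by rewrite -ea -em) ltac:(by rewrite -em -ez) Ewm hwv.
have := Dup _ _ Ewm. have := Dup _ _ Em. move=> A1 A2 A3; clear -A1 A2 A3 Hvm; lia.
Qed.

Close Scope R_scope.

Lemma lower b D S x y g :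
  upward_planar_layered_drawing (Et b D) x y g -> (2 * S < b)%N -> (S < D)%N ->
  (forall u v, Et b D u v -> (y v - y u <= Z.of_nat S)%Z) -> False.
Proof.
move=> HD hb hD Hs.
have HD' := HD; move: HD' => [_ [Dup _]].
have b0 : (0 < b)%N by lia.
have [r hr] := @exL b D (0, 0) ltac:(by rewrite mem_L // expn0).
have claim : forall i, (i <= S)%N -> exists v, (vpos v).1 = i /\
    Good y v (Z.of_nat S + 1 - Z.of_nat i).
  elim=> [|i IH] hi.
    exists r; split; first by rewrite hr.
    move=> w T; have [E1 _] := tch_Et T.
    have Erw := E1 ltac:(by rewrite hr).
    have := Hs _ _ Erw; have := Dup _ _ Erw; lia.
  have [v [hv Gv]] := IH ltac:(lia).
  have [w [_ [hw Gw]]] := step HD hb (v:=v) (d:=Z.of_nat S + 1 - Z.of_nat i) ltac:(lia) ltac:(rewrite hv; lia) Gv.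
  exists w; split; first by rewrite hw hv.
  by move=> u Tu; have := Gw u Tu; lia.
have [v [hv Gv]] := claim S (leqnn S).
have [w [T _]] := step HD hb (v:=v) (d:=Z.of_nat S + 1 - Z.of_nat S) ltac:(lia) ltac:(rewrite hv; lia) Gv.
have := Gv _ T.
have [E1 E2] := tch_Et T.
case: (boolP (odd (vpos v).1)) => o.
  have := Dup _ _ (E2 o); lia.
have := Dup _ _ (E1 o); lia.
Qed.

Lemma size_L_le b D : (size (L b D) <= D.+1 * b ^ D)%N.
Proof.
by rewrite /L size_filter (leq_trans (count_size _ _)) // size_allpairs !size_iota.
Qed.

Lemma size_L_ge b D : (0 < b)%N -> (b ^ D <= size (L b D))%N.
Proof.
move=> b0.
have -> : b ^ D = size [seq (D, j) | j <- iota 0 (b ^ D)] by rewrite size_map size_iota.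
apply: uniq_leq_size.
  rewrite map_inj_uniq ?iota_uniq //; by move=> ? ? [].
move=> p /mapP [j hj ->]; rewrite mem_L //= leqnn /=.
by move: hj; rewrite mem_iota.
Qed.

Lemma expmono a c e : (a <= c)%N -> (a ^ e <= c ^ e)%N.
Proof. by case: e => [|e] h //; rewrite leq_exp2r. Qed.

Lemma nat_ineq S : (7 <= S)%N -> (S.+2 * (S.*2.+1) ^ S.+1 <= S.+1 ^ (S.*2))%N.
Proof.
move=> hS.
have h1 : (S.+2 * (S.*2.+1) ^ S.+1 <= (S.*2.+2) ^ S.+2)%N.
  rewrite [X in (_ <= X)%N]expnS.
  apply: leq_mul; first lia.
  apply: expmono; lia.
have h2 : (S.*2.+2) ^ S.+2 = 2 ^ S.+2 * S.+1 ^ S.+2.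
  by rewrite -expnMn; congr expn; lia.
have h3 : (2 ^ S.+2 <= S.+1 ^ (S - 2))%N.
  apply: (@leq_trans (8 ^ (S - 2))).
    have -> : 8 = 2 ^ 3 by [].
    rewrite -expnM; apply: leq_pexp2l => //; lia.
  apply: expmono; lia.
have h4 : S.+1 ^ (S.*2) = S.+1 ^ (S - 2) * S.+1 ^ S.+2.
  by rewrite -expnD; congr expn; lia.
rewrite h4; apply: leq_trans h1 _; rewrite h2 leq_mul2r; apply/orP; right; exact: h3.
Qed.

Open Scope R_scope.

Lemma INR_expn (a e : nat) : INR (a ^ e)%N = INR a ^ e.
Proof.
elim: e => [|e IH]; first by rewrite expn0 /=.
by rewrite expnS -multE mult_INR IH /=.
Qed.

Lemma ln_le' x y : 0 < x -> x <= y -> ln x <= ln y.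
Proof.
move=> hx [h|->]; last by right.
by left; apply: ln_increasing.
Qed.

Lemma c_le (n S : nat) : (2 ^ S.+1 <= n)%N -> (n <= S.+1 ^ (S.*2))%N -> (1 <= S)%N ->
  Rdiv (log2 (INR n)) (Rmult (IZR 2) (log2 (log2 (INR n)))) <= INR S.
Proof.
move=> h1 h2 hS.
have l2 : 0 < ln 2 by have := ln_lt_2; lra.
have hn1 : 2 ^ S.+1 <= INR n.
  have := le_INR _ _ (elimT leP h1); by rewrite INR_expn.
have p2 : 0 < 2 ^ S.+1 by apply: pow_lt; lra.
have hnpos : 0 < INR n by lra.
have hlnn : INR (S.+1) * ln 2 <= ln (INR n).
  rewrite -ln_pow; last lra. exact: ln_le'.
have hS1 : 2 <= INR S.+1.
  have := le_INR _ _ (elimT leP (hS : (1 < S.+1)%N)); by rewrite /=.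
set Ln := ln (INR n) / ln 2.
have hLn : INR S.+1 <= Ln.
  rewrite /Ln; apply: (Rmult_le_reg_r (ln 2)) => //.
  by field_simplify; lra.
have hB : 0 < ln Ln.
  rewrite -ln_1; apply: ln_increasing; lra.
have hA : ln (INR n) <= 2 * INR S * ln Ln.
  apply: Rle_trans (ln_le' hnpos (le_INR _ _ (elimT leP h2))) _.
  rewrite INR_expn ln_pow; last (have := pos_INR S; rewrite S_INR; lra).
  have : INR (S.*2) = 2 * INR S by rewrite -mul2n -multE mult_INR.
  move=> ->.
  have := ln_le' (ltac:(rewrite S_INR; have := pos_INR S; lra) : 0 < INR S.+1) hLn.
  have := pos_INR S; nra.
rewrite /log2 -/Ln.
have -> : Ln / (2 * (ln Ln / ln 2)) = ln (INR n) / (2 * ln Ln).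
  rewrite /Ln; field; split; [change (ln Ln <> 0)|]; lra.
apply: (Rmult_le_reg_r (2 * ln Ln)); first lra.
have -> : ln (INR n) / (2 * ln Ln) * (2 * ln Ln) = ln (INR n) by field; lra.
lra.
Qed.

Close Scope R_scope.

Theorem mainTheorem4 :
  forall m : nat, exists n : nat, (m < n)%N /\
    exists E : rel 'I_n,
      directed_tree E /\ paths_length_le1 E /\
      span_gt E (Rdiv (log2 (INR n)) (Rmult (IZR 2) (log2 (log2 (INR n))))).
Proof.
move=> m.
set S := (m + 7)%N.
set b := S.*2.+1. set D := S.+1.
have b0 : (0 < b)%N by [].
have hge := size_L_ge D b0.
have hle := size_L_le b D.
have h2 : (2 ^ S.+1 <= size (L b D))%N.
  apply: leq_trans hge; apply: expmono; rewrite /b; lia.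
have hup : (size (L b D) <= S.+1 ^ (S.*2))%N.
  apply: leq_trans hle _; apply: (@nat_ineq S); rewrite /S; lia.
exists (size (L b D)); split.
  apply: leq_trans h2; apply: (@leq_trans S.+2); first lia.
  by apply: ltn_expl.
exists (Et b D); split; first exact: Et_tree.
split; first exact: Et_pl1.
split; first by exists (@xd b D), (@yd b D), (@gd b D); apply: drawing.
move=> x y g HD.
have hc := c_le h2 hup ltac:(rewrite /S; lia).
case: (classic (exists u v, Et b D u v /\ (Z.of_nat S < y v - y u)%Z)) => [[u [v [Huv H]]]|H].
  exists u, v; split => //.
  apply: Rle_lt_trans hc _.
  rewrite INR_IZR_INZ; apply: IZR_lt.
  exact: H.
exfalso; apply: (lower HD (S := S)) => //; first by rewrite /b; lia.
move=> u v Huv; case: (Z_le_gt_dec (y v - y u) (Z.of_nat S)) => // hgt.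
by exfalso; apply: H; exists u, v; split => //; lia.
Qed.
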